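(* Let $X=\bigsqcup_{\lambda\in\Lambda}G_\lambda$ be an MCQ, $R$ a ring and $M$ a left $R$-module. For every 6-tuple $(f_1,f_2,f_3,f_4;\phi_1,\phi_2)$ of maps ($f_1,f_2:X\times X\to R$, $f_3,f_4:\bigsqcup_\lambda(G_\lambda\times G_\lambda)\to R$, $\phi_1:X\times X\to M$, $\phi_2:\bigsqcup_\lambda(G_\lambda\times G_\lambda)\to M$) satisfying conditions (0-i)–(4-$\phi$), there exists an augmented MCQ Alexander pair $(g_1,g_2;\psi_1,\psi_2)$ (with $g_1,g_2:X\times X\to R$, $\psi_1:X\times X\to M$, $\psi_2:\bigsqcup_\lambda(G_\lambda\times G_\lambda)\to M$) such that the MCQs $\widetilde X(f_1,f_2,f_3,f_4;\phi_1,\phi_2)$ and $\widetilde X(g_1,g_2;\psi_1,\psi_2)$ are isomorphic.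
   Context: A multiple conjugation quandle (MCQ) is a set $X=\bigsqcup_{\lambda\in\Lambda}G_\lambda$ that is a disjoint union of groups $G_\lambda$, together with a binary operation $\triangleleft:X\times X\to X$ such that: (i) for all $a,b\in G_\lambda$, $a\triangleleft b=b^{-1}ab$; (ii) for all $x\in X$ and $a,b\in G_\lambda$, $x\triangleleft e_\lambda=x$ and $x\triangleleft(ab)=(x\triangleleft a)\triangleleft b$, where $e_\lambda$ is the identity of $G_\lambda$; (iii) for all $x,y,z\in X$, $(x\triangleleft y)\triangleleft z=(x\triangleleft z)\triangleleft(y\triangleleft z)$; (iv) for all $x\in X$ and $a,b\in G_\lambda$, the elements $a\triangleleft x$ and $b\triangleleft x$ lie in a common group $G_\mu$ and $(ab)\triangleleft x=(a\triangleleft x)(b\triangleleft x)$. For $x\in X$, $G_x$ denotes the group containing $x$, $e_x$ its identity, $x^{-1}$ the inverse of $x$ in $G_x$. $\bigsqcup_{\lambda}(G_\lambda\times G_\lambda)$ is the set of pairs of elements lying in a common group $G_\lambda$. An MCQ isomorphism is a bijection $f$ with $f(x\triangleleft y)=f(x)\triangleleft f(y)$ for all $x,y$ and $f(ab)=f(a)f(b)$ whenever $a,b$ lie in a common group. Rings have a multiplicative identity $1\neq0$ and need not be commutative. Conditions (0-i)–(4-$\phi$) on a 6-tuple $(f_1,f_2,f_3,f_4;\phi_1,\phi_2)$: For all $\lambda$ and $a,b,c\in G_\lambda$: (0-i) $f_3(a,b)$, $f_4(a,b)$ invertible; (0-ii) $f_3(ab,c)f_3(a,b)=f_3(a,bc)$;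 (0-iii) $f_3(ab,c)f_4(a,b)=f_4(a,bc)f_3(b,c)$; (0-iv) $f_4(ab,c)=f_4(a,bc)f_4(b,c)$; (0-$\phi$) $f_3(ab,c)\phi_2(a,b)+\phi_2(ab,c)=f_4(a,bc)\phi_2(b,c)+\phi_2(a,bc)$. For all $a,b\in G_\lambda$: (1-i) $f_1(a,b)=f_4(b^{-1},ab)f_3(a,b)$; (1-ii) $f_3(b,b^{-1}ab)+f_4(b,b^{-1}ab)f_2(a,b)=f_4(a,b)$; (1-$\phi$) $f_4(b,b^{-1}ab)\phi_1(a,b)+\phi_2(b,b^{-1}ab)=\phi_2(a,b)$. For all $x\in X$, $a,b\in G_\lambda$: (2-i) $f_1(x,e_\lambda)=1$; (2-ii) $f_1(x,ab)=f_1(x\triangleleft a,b)f_1(x,a)$; (2-iii) $f_2(x,ab)f_3(a,b)=f_1(x\triangleleft a,b)f_2(x,a)$; (2-iv) $f_2(x,ab)f_4(a,b)=f_2(x\triangleleft a,b)$; (2-$\phi$i) $f_2(x,e_\lambda)\phi_2(e_\lambda,e_\lambda)=\phi_1(x,e_\lambda)$; (2-$\phi$ii) $f_2(x,ab)\phi_2(a,b)+\phi_1(x,ab)=f_1(x\triangleleft a,b)\phi_1(x,a)+\phi_1(x\triangleleft a,b)$. For all $x,y,z\in X$: (3-i) $f_1(x\triangleleft y,z)f_1(x,y)=f_1(x\triangleleft z,y\triangleleft z)f_1(x,z)$; (3-ii) $f_1(x\triangleleft y,z)f_2(x,y)=f_2(x\triangleleft z,y\triangleleft z)f_1(y,z)$;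 (3-iii) $f_2(x\triangleleft y,z)=f_1(x\triangleleft z,y\triangleleft z)f_2(x,z)+f_2(x\triangleleft z,y\triangleleft z)f_2(y,z)$; (3-$\phi$) $f_1(x\triangleleft y,z)\phi_1(x,y)+\phi_1(x\triangleleft y,z)=f_1(x\triangleleft z,y\triangleleft z)\phi_1(x,z)+f_2(x\triangleleft z,y\triangleleft z)\phi_1(y,z)+\phi_1(x\triangleleft z,y\triangleleft z)$. For all $a,b\in G_\lambda$, $x\in X$: (4-i) $f_1(ab,x)f_3(a,b)=f_3(a\triangleleft x,b\triangleleft x)f_1(a,x)$; (4-ii) $f_1(ab,x)f_4(a,b)=f_4(a\triangleleft x,b\triangleleft x)f_1(b,x)$; (4-iii) $f_2(ab,x)=f_3(a\triangleleft x,b\triangleleft x)f_2(a,x)+f_4(a\triangleleft x,b\triangleleft x)f_2(b,x)$; (4-$\phi$) $f_1(ab,x)\phi_2(a,b)+\phi_1(ab,x)=f_3(a\triangleleft x,b\triangleleft x)\phi_1(a,x)+f_4(a\triangleleft x,b\triangleleft x)\phi_1(b,x)+\phi_2(a\triangleleft x,b\triangleleft x)$. For such a 6-tuple, $\widetilde X(f_1,f_2,f_3,f_4;\phi_1,\phi_2)$ is the MCQ $\bigsqcup_\lambda(G_\lambda\times M)$ with $(x,u)\triangleleft(y,v)=(x\triangleleft y,\ f_1(x,y)u+f_2(x,y)v+\phi_1(x,y))$ and, for $a,b\in G_\lambda$, $(a,u)(b,v)=(ab,\ f_3(a,b)u+f_4(a,b)v+\phi_2(a,b))$. An MCQ Alexander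 pair is a pair of maps $g_1,g_2:X\times X\to R$ such that: (A1) for all $a,b\in G_\lambda$: $g_1(a,b)+g_2(a,b)=g_1(a,a^{-1}b)$; (A2) for all $a,b\in G_\lambda$, $x\in X$: $g_1(a,x)=g_1(b,x)$ and $g_2(ab,x)=g_2(a,x)+g_1(b\triangleleft x,a^{-1}\triangleleft x)g_2(b,x)$; (A3) for all $x\in X$, $a,b\in G_\lambda$: $g_1(x,e_\lambda)=1$, $g_1(x,ab)=g_1(x\triangleleft a,b)g_1(x,a)$, $g_2(x,ab)=g_1(x\triangleleft a,b)g_2(x,a)$; (A4) for all $x,y,z\in X$: $g_1(x\triangleleft y,z)g_1(x,y)=g_1(x\triangleleft z,y\triangleleft z)g_1(x,z)$; $g_1(x\triangleleft y,z)g_2(x,y)=g_2(x\triangleleft z,y\triangleleft z)g_1(y,z)$; $g_2(x\triangleleft y,z)=g_1(x\triangleleft z,y\triangleleft z)g_2(x,z)+g_2(x\triangleleft z,y\triangleleft z)g_2(y,z)$. For an MCQ Alexander pair $(g_1,g_2)$, a $(g_1,g_2)$-twisted 2-cocycle is a pair $\psi_1:X\times X\to M$, $\psi_2:\bigsqcup_\lambda(G_\lambda\times G_\lambda)\to M$ with: (T1) for $a,b,c\in G_\lambda$: $\psi_2(a,b)+\psi_2(ab,c)=g_1(a,a^{-1})\psi_2(b,c)+\psi_2(a,bc)$; (T2) for $a,b\in G_\lambda$: $g_1(b,b^{-1})\psi_1(a,b)+\psi_2(b,b^{-1}ab)=\psi_2(a,b)$; (T3) for $x\in X$, $a,b\in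 G_\lambda$: $g_2(x,ab)\psi_2(a,b)+\psi_1(x,ab)=g_1(x\triangleleft a,b)\psi_1(x,a)+\psi_1(x\triangleleft a,b)$; (T4) for $x,y,z\in X$: $g_1(x\triangleleft y,z)\psi_1(x,y)+\psi_1(x\triangleleft y,z)=g_1(x\triangleleft z,y\triangleleft z)\psi_1(x,z)+g_2(x\triangleleft z,y\triangleleft z)\psi_1(y,z)+\psi_1(x\triangleleft z,y\triangleleft z)$; (T5) for $a,b\in G_\lambda$, $x\in X$: $g_1(ab,x)\psi_2(a,b)+\psi_1(ab,x)=\psi_1(a,x)+g_1(a\triangleleft x,a^{-1}\triangleleft x)\psi_1(b,x)+\psi_2(a\triangleleft x,b\triangleleft x)$. $(g_1,g_2;\psi_1,\psi_2)$ is an augmented MCQ Alexander pair if $(g_1,g_2)$ is an MCQ Alexander pair and $(\psi_1,\psi_2)$ is a $(g_1,g_2)$-twisted 2-cocycle. For such a pair, $\widetilde X(g_1,g_2;\psi_1,\psi_2)$ is the MCQ $\bigsqcup_\lambda(G_\lambda\times M)$ with $(x,u)\triangleleft(y,v)=(x\triangleleft y,\ g_1(x,y)u+g_2(x,y)v+\psi_1(x,y))$ and, for $a,b\in G_\lambda$, $(a,u)(b,v)=(ab,\ u+g_1(a,a^{-1})v+\psi_2(a,b))$. *)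

(* Defs.v *)
From mathcomp Require Import all_boot all_algebra.
Set Implicit Arguments. Unset Strict Implicit. Unset Printing Implicit Defensive.
Import GRing.Theory.
Local Open Scope ring_scope.

(* A multiple conjugation quandle X = disjoint union of groups G_l (l : idx).
   [lab x] is the index l of the group G_x containing x; [mul] is the group
   product (only meaningful on pairs in a common group); [one l] = e_l;
   [inv x] = inverse of x in G_x; [tri] is the operation <|. *)
Record MCQ := {
  carrier :> Type;
  idx : Type;
  lab : carrier -> idx;
  mul : carrier -> carrier -> carrier;
  one : idx -> carrier;
  inv : carrier -> carrier;
  tri : carrier -> carrier -> carrier;
  lab_mul : forall a b, lab a = lab b -> lab (mul a b) = lab a;
  lab_one : forall l, lab (one l) = l;
  lab_inv : forall a, lab (inv a) = lab a;
  mulA : forall a b c, lab a = lab b -> lab b = lab c ->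
    mul (mul a b) c = mul a (mul b c);
  mul1x : forall a, mul (one (lab a)) a = a;
  mulx1 : forall a, mul a (one (lab a)) = a;
  mulVx : forall a, mul (inv a) a = one (lab a);
  mulxV : forall a, mul a (inv a) = one (lab a);
  mcq_i : forall a b, lab a = lab b -> tri a b = mul (mul (inv b) a) b;
  mcq_ii1 : forall x l, tri x (one l) = x;
  mcq_ii2 : forall x a b, lab a = lab b -> tri x (mul a b) = tri (tri x a) b;
  mcq_iii : forall x y z, tri (tri x y) z = tri (tri x z) (tri y z);
  mcq_iv1 : forall x a b, lab a = lab b -> lab (tri a x) = lab (tri b x);
  mcq_iv2 : forall x a b, lab a = lab b ->
    tri (mul a b) x = mul (tri a x) (tri b x)
}.

Arguments lab {_}. Arguments mul {_}. Arguments one {_}. Arguments inv {_}.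
Arguments tri {_}.

Definition invertible (R : nzRingType) (r : R) := exists s : R, r * s = 1 /\ s * r = 1.

Section Conditions.
Variables (X : MCQ) (R : nzRingType) (M : lmodType R).

(* Maps on the disjoint union of G_l x G_l are represented by total maps
   X -> X -> _, of which only the values on pairs with lab a = lab b matter. *)
Definition same (a b : X) := lab a = lab b.

Definition six_tuple_conditions (f1 f2 f3 f4 : X -> X -> R) (phi1 phi2 : X -> X -> M) : Prop :=
  (* (0) *)
  (forall a b, same a b -> invertible (f3 a b) /\ invertible (f4 a b)) /\
  (forall a b c, same a b -> same b c -> f3 (mul a b) c * f3 a b = f3 a (mul b c)) /\
  (forall a b c, same a b -> same b c ->
     f3 (mul a b) c * f4 a b = f4 a (mul b c) * f3 b c) /\
  (forall a b c, same a b -> same b c -> f4 (mul a b) c = f4 a (mul b c) * f4 b c) /\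
  (forall a b c, same a b -> same b c ->
     f3 (mul a b) c *: phi2 a b + phi2 (mul a b) c
     = f4 a (mul b c) *: phi2 b c + phi2 a (mul b c)) /\
  (* (1) *)
  (forall a b, same a b -> f1 a b = f4 (inv b) (mul a b) * f3 a b) /\
  (forall a b, same a b ->
     f3 b (mul (mul (inv b) a) b) + f4 b (mul (mul (inv b) a) b) * f2 a b = f4 a b) /\
  (forall a b, same a b ->
     f4 b (mul (mul (inv b) a) b) *: phi1 a b + phi2 b (mul (mul (inv b) a) b)
     = phi2 a b) /\
  (* (2) *)
  (forall x l, f1 x (one l) = 1) /\
  (forall x a b, same a b -> f1 x (mul a b) = f1 (tri x a) b * f1 x a) /\
  (forall x a b, same a b -> f2 x (mul a b) * f3 a b = f1 (tri x a) b * f2 x a) /\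
  (forall x a b, same a b -> f2 x (mul a b) * f4 a b = f2 (tri x a) b) /\
  (forall x l, f2 x (one l) *: phi2 (one l) (one l) = phi1 x (one l)) /\
  (forall x a b, same a b ->
     f2 x (mul a b) *: phi2 a b + phi1 x (mul a b)
     = f1 (tri x a) b *: phi1 x a + phi1 (tri x a) b) /\
  (* (3) *)
  (forall x y z, f1 (tri x y) z * f1 x y = f1 (tri x z) (tri y z) * f1 x z) /\
  (forall x y z, f1 (tri x y) z * f2 x y = f2 (tri x z) (tri y z) * f1 y z) /\
  (forall x y z, f2 (tri x y) z
     = f1 (tri x z) (tri y z) * f2 x z + f2 (tri x z) (tri y z) * f2 y z) /\
  (forall x y z, f1 (tri x y) z *: phi1 x y + phi1 (tri x y) z
     = f1 (tri x z) (tri y z) *: phi1 x z + f2 (tri x z) (tri y z) *: phi1 y z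
       + phi1 (tri x z) (tri y z)) /\
  (* (4) *)
  (forall a b x, same a b ->
     f1 (mul a b) x * f3 a b = f3 (tri a x) (tri b x) * f1 a x) /\
  (forall a b x, same a b ->
     f1 (mul a b) x * f4 a b = f4 (tri a x) (tri b x) * f1 b x) /\
  (forall a b x, same a b ->
     f2 (mul a b) x = f3 (tri a x) (tri b x) * f2 a x + f4 (tri a x) (tri b x) * f2 b x) /\
  (forall a b x, same a b ->
     f1 (mul a b) x *: phi2 a b + phi1 (mul a b) x
     = f3 (tri a x) (tri b x) *: phi1 a x + f4 (tri a x) (tri b x) *: phi1 b x
       + phi2 (tri a x) (tri b x)).

Definition mcq_alexander_pair (g1 g2 : X -> X -> R) : Prop :=
  (forall a b, same a b -> g1 a b + g2 a b = g1 a (mul (inv a) b)) /\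
  (forall a b x, same a b -> g1 a x = g1 b x) /\
  (forall a b x, same a b ->
     g2 (mul a b) x = g2 a x + g1 (tri b x) (tri (inv a) x) * g2 b x) /\
  (forall x l, g1 x (one l) = 1) /\
  (forall x a b, same a b -> g1 x (mul a b) = g1 (tri x a) b * g1 x a) /\
  (forall x a b, same a b -> g2 x (mul a b) = g1 (tri x a) b * g2 x a) /\
  (forall x y z, g1 (tri x y) z * g1 x y = g1 (tri x z) (tri y z) * g1 x z) /\
  (forall x y z, g1 (tri x y) z * g2 x y = g2 (tri x z) (tri y z) * g1 y z) /\
  (forall x y z, g2 (tri x y) z
     = g1 (tri x z) (tri y z) * g2 x z + g2 (tri x z) (tri y z) * g2 y z).

Definition twisted_2cocycle (g1 g2 : X -> X -> R) (psi1 psi2 : X -> X -> M) : Prop :=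
  (forall a b c, same a b -> same b c ->
     psi2 a b + psi2 (mul a b) c = g1 a (inv a) *: psi2 b c + psi2 a (mul b c)) /\
  (forall a b, same a b ->
     g1 b (inv b) *: psi1 a b + psi2 b (mul (mul (inv b) a) b) = psi2 a b) /\
  (forall x a b, same a b ->
     g2 x (mul a b) *: psi2 a b + psi1 x (mul a b)
     = g1 (tri x a) b *: psi1 x a + psi1 (tri x a) b) /\
  (forall x y z, g1 (tri x y) z *: psi1 x y + psi1 (tri x y) z
     = g1 (tri x z) (tri y z) *: psi1 x z + g2 (tri x z) (tri y z) *: psi1 y z
       + psi1 (tri x z) (tri y z)) /\
  (forall a b x, same a b ->
     g1 (mul a b) x *: psi2 a b + psi1 (mul a b) x
     = psi1 a x + g1 (tri a x) (tri (inv a) x) *: psi1 b x + psi2 (tri a x) (tri b x)).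

Definition augmented_mcq_alexander_pair g1 g2 psi1 psi2 : Prop :=
  mcq_alexander_pair g1 g2 /\ twisted_2cocycle g1 g2 psi1 psi2.

(* The extensions, on the carrier X * M = disjoint union of G_l x M;
   (x,u) lies in the group indexed by lab x. *)
Definition extF_tri (f1 f2 : X -> X -> R) (phi1 : X -> X -> M)
  (p q : X * M) : X * M :=
  (tri p.1 q.1, f1 p.1 q.1 *: p.2 + f2 p.1 q.1 *: q.2 + phi1 p.1 q.1).
Definition extF_mul (f3 f4 : X -> X -> R) (phi2 : X -> X -> M)
  (p q : X * M) : X * M :=
  (mul p.1 q.1, f3 p.1 q.1 *: p.2 + f4 p.1 q.1 *: q.2 + phi2 p.1 q.1).
Definition extG_tri (g1 g2 : X -> X -> R) (psi1 : X -> X -> M)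
  (p q : X * M) : X * M :=
  (tri p.1 q.1, g1 p.1 q.1 *: p.2 + g2 p.1 q.1 *: q.2 + psi1 p.1 q.1).
Definition extG_mul (g1 : X -> X -> R) (psi2 : X -> X -> M)
  (p q : X * M) : X * M :=
  (mul p.1 q.1, p.2 + g1 p.1 (inv p.1) *: q.2 + psi2 p.1 q.1).

End Conditions.

Definition mcq_isomorphism (A B LA LB : Type)
  (labA : A -> LA) (mulA triA : A -> A -> A)
  (labB : B -> LB) (mulB triB : B -> B -> B) (F : A -> B) : Prop :=
  bijective F /\
  (forall x y, F (triA x y) = triB (F x) (F y)) /\
  (forall a b, labA a = labA b -> F (mulA a b) = mulB (F a) (F b)).

(* Main.v *)
Require Import Defs.
From mathcomp Require Import all_boot all_algebra.
Require Import Defs.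
From Stdlib Require Import ClassicalEpsilon.
Set Implicit Arguments. Unset Strict Implicit. Unset Printing Implicit Defensive.
Import GRing.Theory.
Local Open Scope ring_scope.
Lemma invK (X : MCQ) (a : X) : inv (inv a) = a.
Proof.
rewrite -[inv (inv a)]mulx1 !lab_inv -(mulVx a) -Defs.mulA ?lab_inv //.
by rewrite mulVx lab_inv mul1x.
Qed.

Lemma mul_one_inv (X : MCQ) (a b : X) : lab a = lab b -> mul a b = one (lab a) -> b = inv a.
Proof.
move=> Hab H.
rewrite -[b]mul1x -Hab -(mulVx a) Defs.mulA ?lab_inv // H.
by rewrite -(lab_inv a) mulx1.
Qed.

Lemma idem_one (X : MCQ) (u : X) : mul u u = u -> u = one (lab u).
Proof.
move=> H. rewrite -(mulVx u) -{3}H -Defs.mulA ?lab_inv //.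
by rewrite mulVx mul1x.
Qed.

Lemma tri_one (X : MCQ) l (x : X) : tri (one l) x = one (lab (tri (one l) x)).
Proof.
apply: idem_one. rewrite -mcq_iv2 //.
by rewrite -{2}(lab_one l) mulx1.
Qed.

Lemma tri_inv (X : MCQ) (a x : X) : tri (inv a) x = inv (tri a x).
Proof.
apply: mul_one_inv. by apply: mcq_iv1; rewrite lab_inv.
rewrite -mcq_iv2 ?lab_inv // mulxV tri_one; congr one; apply: mcq_iv1; by rewrite lab_one.
Qed.

Lemma inv_mul (X : MCQ) (a b : X) : lab a = lab b -> inv (mul a b) = mul (inv b) (inv a).
Proof.
move=> Hab; apply: esym; apply: mul_one_inv.
  by rewrite !lab_mul ?lab_inv.
rewrite Defs.mulA ?lab_mul ?lab_inv //.
rewrite -[mul b (mul (inv b) (inv a))]Defs.mulA ?lab_inv // mulxV.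
by rewrite -Hab -{1}(lab_inv a) mul1x mulxV.
Qed.

Lemma mul_invr (X : MCQ) (a b : X) : lab a = lab b -> mul a (mul (inv a) b) = b.
Proof. move=> Hab. by rewrite -Defs.mulA ?lab_inv // mulxV Hab mul1x. Qed.

Lemma conj_mul (X : MCQ) (a b : X) : lab a = lab b -> mul b (mul (mul (inv b) a) b) = mul a b.
Proof.
move=> Hab. rewrite -Defs.mulA ?lab_mul ?lab_inv //.
by rewrite mul_invr.
Qed.

Lemma inv_mulV (X : MCQ) (a b : X) : lab a = lab b -> inv (mul (inv a) b) = mul (inv b) a.
Proof. move=> Hab. by rewrite inv_mul ?lab_inv // invK. Qed.

Lemma idem_inv (R : nzRingType) (r : R) : invertible r -> r = r * r -> r = 1.
Proof. case=> s [_ Hs] H. by rewrite -Hs {2}H mulrA Hs mul1r. Qed.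

Theorem theorem4p3 (X : MCQ) (R : nzRingType) (M : lmodType R)
  (f1 f2 f3 f4 : X -> X -> R) (phi1 phi2 : X -> X -> M) :
  six_tuple_conditions f1 f2 f3 f4 phi1 phi2 ->
  exists (g1 g2 : X -> X -> R) (psi1 psi2 : X -> X -> M),
    augmented_mcq_alexander_pair g1 g2 psi1 psi2 /\
    exists F : X * M -> X * M,
      mcq_isomorphism (fun p : X * M => lab p.1)
        (extF_mul f3 f4 phi2) (extF_tri f1 f2 phi1)
        (fun p : X * M => lab p.1)
        (extG_mul g1 psi2) (extG_tri g1 g2 psi1) F.
Proof.
case=> H0i [H0ii [H0iii [H0iv [H0p [H1i [H1ii [H1p [H2i [H2ii [H2iii [H2iv [H2pi [H2pii [H3i [H3ii [H3iii [H3p [H4i [H4ii [H4iii H4p]]]]]]]]]]]]]]]]]]]].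
pose p (x : X) := f3 (one (lab x)) x.
have [q Hq] : exists q : X -> R, forall x, p x * q x = 1 /\ q x * p x = 1.
  have H x : exists s, p x * s = 1 /\ s * p x = 1.
    by case: (H0i (one (lab x)) x (lab_one _)) => [[s Hs] _]; exists s.
  exists (fun x => proj1_sig (constructive_indefinite_description _ (H x))).
  move=> x; exact: proj2_sig (constructive_indefinite_description _ (H x)).
have hpq r x : r * p x * q x = r by rewrite -mulrA (Hq x).1 mulr1.
have hqp r x : r * q x * p x = r by rewrite -mulrA (Hq x).2 mulr1.
have hP1 y z : lab y = lab z -> f3 y z * p y = p (mul y z).
  move=> Hyz; have := H0ii (one (lab y)) y z (lab_one _) Hyz.
  by rewrite mul1x /p lab_mul.
have hP y z : lab y = lab z -> q (mul y z) * f3 y z = q y.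
  move=> Hyz; by rewrite -[q y]mul1r -(Hq (mul y z)).2 -hP1 // !mulrA hpq.
pose t (x : X) := q x * f4 x (one (lab x)).
have hG y z : lab y = lab z -> q (mul y z) * f4 y z = t y * q z.
  move=> Hyz.
  have e2 : f3 y z * f4 y (one (lab y)) = f4 y z * p z.
    have := H0iii y (one (lab y)) z (esym (lab_one _)) (etrans (lab_one _) Hyz).
    rewrite mulx1 (_ : mul (one (lab y)) z = z); last by rewrite Hyz mul1x.
    by rewrite /p -Hyz => ->.
  by rewrite /t -[q (mul y z) * _](hpq _ z) -[q (mul y z) * f4 y z * p z]mulrA -e2 mulrA hP.
have hp1 l : p (one l) = 1.
  apply: idem_inv; first by exists (q (one l)); exact: Hq.
  have E : mul (one l) (one l) = one l by rewrite -{2}(lab_one l) mulx1.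
  have := hP1 (one l) (one l) erefl.
  rewrite E (_ : f3 (one l) (one l) = p (one l)); last by rewrite /p lab_one.
  by move=> ->.
have hq1 l : q (one l) = 1.
  by rewrite -[q (one l)]mulr1 -(hp1 l) (Hq _).2.
have ht1 l : t (one l) = 1.
  rewrite /t lab_one hq1 mul1r; apply: idem_inv.
    by case: (H0i (one l) (one l) erefl).
  have := H0iv (one l) (one l) (one l) erefl erefl.
  have E : mul (one l) (one l) = one l by rewrite -{2}(lab_one l) mulx1.
  by rewrite E => <-.
have tmul a b : lab a = lab b -> t (mul a b) = t a * t b.
  move=> Hab.
  rewrite /t lab_mul // Hab H0iv //; last by rewrite /same lab_one.
  by rewrite mulx1 mulrA hG // /t -Hab !mulrA.
have htinv b : t b * t (inv b) = 1 /\ t (inv b) * t b = 1.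
  split.
    by rewrite -tmul ?lab_inv // mulxV ht1.
  by rewrite -tmul ?lab_inv // mulVx ht1.
have hg1 a b : lab a = lab b -> q (tri a b) * f1 a b * p a = t (inv b).
  move=> Hab.
  rewrite H1i // mcq_i // Defs.mulA ?lab_inv //.
  rewrite mulrA hG ?lab_mul ?lab_inv // -mulrA -mulrA hP1 //.
  by rewrite (Hq _).2 mulr1.
have hg1' a b : lab a = lab b -> q (tri a b) * f1 a b * p a = t (inv b) := hg1 a b.
have hg1mul a b x : lab a = lab b ->
  q (tri (mul a b) x) * f1 (mul a b) x * p (mul a b) = q (tri a x) * f1 a x * p a.
  move=> Hab. rewrite -hP1 // mulrA -(mulrA (q _)) H4i // (mcq_iv2 x Hab) mulrA.
  by rewrite hP ?(mcq_iv1 x Hab).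
exists (fun x y => q (tri x y) * f1 x y * p x).
exists (fun x y => q (tri x y) * f2 x y * p y).
exists (fun x y => q (tri x y) *: phi1 x y).
exists (fun a b => q (mul a b) *: phi2 a b).
split; [split|].
-
  rewrite /mcq_alexander_pair /same.
  split; [|split; [|split; [|split; [|split; [|split; [|split; [|split]]]]]]].
  + move=> a b Hab /=.
    have E1 : q (mul a b) * f3 b (mul (mul (inv b) a) b) * p b = 1.
      by rewrite -(conj_mul Hab) hP ?lab_mul ?lab_inv // (Hq b).2.
    have E2 : q (mul a b) * (f4 b (mul (mul (inv b) a) b) * f2 a b) * p b
              = t b * (q (tri a b) * f2 a b * p b).
      by rewrite -(conj_mul Hab) mulrA hG ?lab_mul ?lab_inv // (mcq_i Hab) !mulrA.
    have E3 : q (mul a b) * f4 a b * p b = t a by rewrite hG // hqp.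
    have kA : t b * (q (tri a b) * f2 a b * p b) = t a - 1.
      rewrite -E2 -E3 -E1 -(H1ii a b Hab) mulrDr mulrDl.
      by rewrite [X in _ = X - _]addrC addrK.
    rewrite hg1 // hg1 ?lab_mul ?lab_inv // inv_mulV // tmul ?lab_inv //.
    rewrite -[t (inv b) + _]mul1r -(htinv b).2 -mulrA mulrDr (htinv b).1 kA.
    by rewrite addrC subrK.
  + move=> a b x Hab /=.
    by rewrite -(mul_invr Hab) hg1mul ?lab_mul ?lab_inv.
  + move=> a b x Hab /=.
    rewrite hg1; last by apply: mcq_iv1; rewrite lab_inv.
    rewrite tri_inv invK.
    rewrite H4iii // mulrDr mulrDl (mcq_iv2 x Hab) mulrA hP ?(mcq_iv1 x Hab) //.
    by rewrite mulrA hG ?(mcq_iv1 x Hab) // !mulrA.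
  + move=> x l /=. by rewrite mcq_ii1 H2i mulr1 (Hq x).2.
  + move=> x a b Hab /=. by rewrite (mcq_ii2 x Hab) H2ii // !mulrA hpq.
  + move=> x a b Hab /=.
    rewrite (mcq_ii2 x Hab) !mulrA hpq -[_ * f1 _ _ * f2 x a]mulrA -H2iii //.
    by rewrite -hP1 // !mulrA.
  + move=> x y z /=.
    by rewrite !mulrA !hpq mcq_iii -[_ * f1 _ _ * f1 x y]mulrA H3i !mulrA.
  + move=> x y z /=.
    by rewrite !mulrA !hpq mcq_iii -[_ * f1 _ _ * f2 x y]mulrA H3ii !mulrA.
  + move=> x y z /=.
    by rewrite H3iii mcq_iii mulrDr mulrDl !mulrA !hpq.
- rewrite /twisted_2cocycle /same.
  split; [|split; [|split; [|split]]].
  + move=> a b c Hab Hbc /=.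
    have Eabc := Defs.mulA Hab Hbc.
    have Labc : lab (mul a b) = lab c by rewrite lab_mul // Hab.
    have Labc' : lab a = lab (mul b c) by rewrite lab_mul.
    have := congr1 (fun v => q (mul (mul a b) c) *: v) (H0p a b c Hab Hbc) => /=.
    rewrite !scalerDr !scalerA hP // Eabc hG // => E.
    by rewrite hg1 ?lab_inv // invK.
  + move=> a b Hab /=.
    have Lc : lab b = lab (mul (mul (inv b) a) b) by rewrite ?lab_mul ?lab_inv.
    rewrite hg1 ?lab_inv // invK scalerA (mcq_i Hab).
    have := congr1 (fun v => q (mul a b) *: v) (H1p a b Hab) => /=.
    by rewrite scalerDr !scalerA -{1 2}(conj_mul Hab) hG.
  + move=> x a b Hab /=.
    by rewrite !scalerA !hpq (mcq_ii2 x Hab) -!scalerA -!scalerDr H2pii.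
  + move=> x y z /=.
    by rewrite !scalerA !hpq mcq_iii -!scalerA -!scalerDr H3p.
  + move=> a b x Hab /=.
    have L' := mcq_iv1 x Hab.
    rewrite (hg1 (tri a x) (tri (inv a) x)); last by apply: mcq_iv1; rewrite lab_inv.
    rewrite tri_inv invK scalerA hpq (mcq_iv2 x Hab) scalerA.
    rewrite -(hG (tri a x) (tri b x)) // -(hP (tri a x) (tri b x)) //.
    by rewrite -!scalerA -!scalerDr H4p.
- exists (fun pr => (pr.1, q pr.1 *: pr.2)).
  split; [|split].
  + exists (fun pr => (pr.1, p pr.1 *: pr.2)) => [[x u]|[x u]] /=.
      by rewrite scalerA (Hq x).1 scale1r.
    by rewrite scalerA (Hq x).2 scale1r.
  + move=> [x u] [y v] /=. rewrite /extF_tri /extG_tri /=. congr (_, _).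
    by rewrite !scalerDr !scalerA !hpq.
  + move=> [a u] [b v] /= Hab. rewrite /extF_mul /extG_mul /=. congr (_, _).
    rewrite !scalerDr !scalerA hP // hG // hg1 ?lab_inv // invK.
    by [].
Qed.
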